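(* Let $\tilde n$ be a set of names and $\mathtt{s}\in\tilde n$. Let $M$ be a ground term public with respect to $\tilde n$, and let $U,V$ be terms such that for every occurrence $q_{\mathtt{s}}$ of $\mathtt{s}$ in $U$ (respectively in $V$) there is an encryption occurrence $q_{\mathsf{enc}}$ in $U$ (respectively in $V$) with $q_{\mathsf{enc}}\cdot1\le q_{\mathtt{s}}$ which is an agent encryption with respect to $\tilde n\setminus\{\mathtt{s}\}$ and a probabilistic encryption with respect to $\{U,V\}$. Then $U[\mathtt{s}/M]=V[\mathtt{s}/M]$ (syntactic equality) implies $U=V$.
   Context: Terms are built over function symbols including $\mathsf{enc}$ and $\mathsf{enca}$ (arity 3) and $\mathsf{priv}$, constants, names and variables. A term is public w.r.t. a set of names $\tilde n$ if it contains no name of $\tilde n$ and no symbol $\mathsf{priv}$. Positions are sequences of positive integers ordered by prefix $\le$; $T|_p$ is the subterm at $p$; $T[\mathtt{s}/M]$ replaces every occurrence of the name $\mathtt{s}$ by $M$. An encryption occurrence in $U$ is a position $q$ where the head of $U|_q$ is $\mathsf{enc}$ or $\mathsf{enca}$; it is an agent encryption w.r.t. a set of names $\tilde m$ if $U|_{q\cdot3}\in\tilde m$; it is a probabilistic encryption w.r.t. a set of terms $S$ if for all $W\in S$ and positions $p$ with $W|_p=U|_{q\cdot3}$ we have $p=q'\cdot3$ for some $q'$ with $W|_{q'}=U|_q$. *)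

(* Defs.v *)
From Stdlib Require Import List Arith.
Import ListNotations.

Definition name := nat.
Definition var := nat.

Inductive fsym : Type :=
| Enc : fsym
| Enca : fsym
| Priv : fsym
| Other : nat -> nat -> fsym. (* Other id arity; constants have arity 0 *)

Definition arity (f : fsym) : nat :=
  match f with
  | Enc => 3
  | Enca => 3
  | Priv => 1
  | Other _ k => k
  end.

Inductive term : Type :=
| Name : name -> term
| Var : var -> term
| Fn : fsym -> list term -> term.

Fixpoint wf (t : term) : Prop :=
  match t with
  | Name _ | Var _ => True
  | Fn f args => length args = arity f /\
      (fix wfl (l : list term) : Prop :=
         match l with [] => True | u :: l' => wf u /\ wfl l' end) args
  end.

Fixpoint has_name (n : name) (t : term) : Prop :=
  match t with
  | Name m => m = n
  | Var _ => False
  | Fn _ args =>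
      (fix hl (l : list term) : Prop :=
         match l with [] => False | u :: l' => has_name n u \/ hl l' end) args
  end.

Fixpoint has_var (t : term) : Prop :=
  match t with
  | Name _ => False
  | Var _ => True
  | Fn _ args =>
      (fix hl (l : list term) : Prop :=
         match l with [] => False | u :: l' => has_var u \/ hl l' end) args
  end.

Fixpoint has_priv (t : term) : Prop :=
  match t with
  | Name _ | Var _ => False
  | Fn f args => f = Priv \/
      (fix hl (l : list term) : Prop :=
         match l with [] => False | u :: l' => has_priv u \/ hl l' end) args
  end.

Definition ground (t : term) : Prop := ~ has_var t.

Definition public (ns : name -> Prop) (t : term) : Prop :=
  (forall n, ns n -> ~ has_name n t) /\ ~ has_priv t.

(* positions: sequences of positive integers; argument i is the i-th (1-based) *)
Definition position := list nat.

Definition prefix (p q : position) : Prop := exists r, q = p ++ r.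

Fixpoint subterm (t : term) (p : position) : option term :=
  match p with
  | [] => Some t
  | i :: p' =>
      match t with
      | Fn _ args =>
          match i with
          | 0 => None
          | S j => match nth_error args j with
                   | Some u => subterm u p'
                   | None => None
                   end
          end
      | _ => None
      end
  end.

Fixpoint subst_name (s : name) (M : term) (t : term) : term :=
  match t with
  | Name n => if Nat.eqb n s then M else Name n
  | Var x => Var x
  | Fn f args => Fn f (map (subst_name s M) args)
  end.

Definition is_enc_sym (f : fsym) : Prop := f = Enc \/ f = Enca.

Definition enc_occ (U : term) (q : position) : Prop :=
  exists f args, subterm U q = Some (Fn f args) /\ is_enc_sym f.

Definition agent_enc (ms : name -> Prop) (U : term) (q : position) : Prop :=
  exists n, subterm U (q ++ [3]) = Some (Name n) /\ ms n.

Definition prob_enc (S : term -> Prop) (U : term) (q : position) : Prop :=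
  forall r, subterm U (q ++ [3]) = Some r ->
  forall W p, S W -> subterm W p = Some r ->
  exists q', p = q' ++ [3] /\ subterm W q' = subterm U q.

Definition s_protected (ns : name -> Prop) (s : name) (U V : term) : Prop :=
  forall qs, subterm U qs = Some (Name s) ->
  exists qe, enc_occ U qe /\ prefix (qe ++ [1]) qs /\
    agent_enc (fun n => ns n /\ n <> s) U qe /\
    prob_enc (fun W => W = U \/ W = V) U qe.

(* Main.v *)
Require Import Defs.
From Stdlib Require Import List Arith Lia Classical.
Import ListNotations.

Section S.
Variable s : name.
Variable M : term.

Definition sub := subst_name s M.

Lemma term_ind' (P : term -> Prop) :
  (forall n, P (Name n)) -> (forall x, P (Var x)) ->
  (forall f args, Forall P args -> P (Fn f args)) -> forall t, P t.
Proof.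
  intros HN HV HF. fix IH 1. intros [n|x|f args].
  - apply HN.
  - apply HV.
  - apply HF. induction args as [|a l IHl]; constructor; [apply IH|exact IHl].
Qed.

Lemma subterm_app t p q :
  subterm t (p ++ q) = match subterm t p with Some u => subterm u q | None => None end.
Proof.
  revert t; induction p as [|i p IH]; intros t; simpl; auto.
  destruct t; auto. destruct i; auto. destruct (nth_error l i); auto.
Qed.

Definition sprefix_ok (U : term) (p : position) :=
  forall q1 q2, p = q1 ++ q2 -> q2 <> [] -> subterm U q1 <> Some (Name s).

Definition concl (U V : term) :=
  exists p t, ((subterm U p = Some (Name s) /\ subterm V p = Some t) \/
               (subterm V p = Some (Name s) /\ subterm U p = Some t)) /\
    t <> Name s /\ sprefix_ok U p /\ sprefix_ok V p.

Lemma list_find (l1 l2 : list term) :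
  Forall (fun U => forall V, sub U = sub V -> U <> V -> concl U V) l1 ->
  map sub l1 = map sub l2 -> l1 <> l2 ->
  exists j a b, nth_error l1 j = Some a /\ nth_error l2 j = Some b /\ concl a b.
Proof.
  revert l2; induction l1 as [|a l1 IH]; intros [|b l2] HF Hm Hne; simpl in *;
    try discriminate; try congruence.
  inversion Hm as [[H1 H2]]. inversion HF; subst.
  destruct (classic (a = b)) as [->|Hab].
  - destruct (IH l2) as (j & x & y & ? & ? & ?); auto. congruence.
    exists (S j), x, y; auto.
  - exists 0, a, b; simpl; auto.
Qed.

Lemma find U : forall V, sub U = sub V -> U <> V -> concl U V.
Proof.
  induction U as [n|x|f args IH] using term_ind'; intros V Hs Hne.
  - destruct (Nat.eqb_spec n s).
    + subst. exists [], V. split; [left; simpl; auto|]. split; [congruence|].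
      split; intros q1 q2 E N; destruct q1; simpl in E; try discriminate; subst; congruence.
    + destruct V as [m| |]; unfold sub in Hs; simpl in Hs.
      * destruct (Nat.eqb_spec m s).
        -- subst. exists [], (Name n). split; [right; simpl; auto|]. split; [congruence|].
           split; intros q1 q2 E N; destruct q1; simpl in E; try discriminate; subst; congruence.
        -- destruct (Nat.eqb_spec n s); congruence.
      * destruct (Nat.eqb_spec n s); congruence.
      * destruct (Nat.eqb_spec n s); congruence.
  - destruct V as [m| |]; unfold sub in Hs; simpl in Hs; try congruence.
    destruct (Nat.eqb_spec m s); try congruence. subst.
    exists [], (Var x). split; [right; simpl; auto|]. split; [congruence|].
    split; intros q1 q2 E N; destruct q1; simpl in E; try discriminate; subst; congruence.
  - destruct V as [m|y|g args']; unfold sub in Hs; simpl in Hs; try congruence.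
    + destruct (Nat.eqb_spec m s); try congruence. subst.
      exists [], (Fn f args). split; [right; simpl; auto|]. split; [congruence|].
      split; intros q1 q2 E N; destruct q1; simpl in E; try discriminate; subst; congruence.
    + inversion Hs; subst.
      destruct (list_find args args') as (j & a & b & Ha & Hb & (p & t & Hc & Ht & Pa & Pb)); auto.
      congruence.
      exists (S j :: p), t. split.
      { simpl. rewrite Ha, Hb. exact Hc. }
      split; auto.
      split; intros q1 q2 E N; destruct q1 as [|i q1]; simpl; try discriminate;
        simpl in E; inversion E; subst; simpl; [rewrite Ha|rewrite Hb]; eauto.
Qed.

Lemma follow q : forall U V u, sub U = sub V -> subterm U q = Some u -> sprefix_ok V q ->
  exists v, subterm V q = Some v /\ sub u = sub v.
Proof.
  induction q as [|i q IH]; intros U V u Hs Hu Hp; simpl in *.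
  - inversion Hu; subst; eauto.
  - destruct U as [| |f args]; try discriminate. destruct i; try discriminate.
    destruct (nth_error args i) eqn:E; try discriminate.
    destruct V as [m|y|g args']; unfold sub in Hs; simpl in Hs; try congruence.
    + destruct (Nat.eqb_spec m s); try congruence. subst.
      exfalso; apply (Hp [] (S i :: q)); auto; discriminate.
    + inversion Hs; subst.
      assert (E2 : nth_error (map sub args') i = Some (sub t)).
      { unfold sub in *. rewrite <- H1, nth_error_map, E. reflexivity. }
      rewrite nth_error_map in E2. destruct (nth_error args' i) eqn:E3; try discriminate.
      inversion E2. apply (IH t t0); auto.
      intros q1 q2 Eq N. specialize (Hp (S i :: q1) q2). simpl in Hp. rewrite E3 in Hp.
      apply Hp; auto; subst; reflexivity.
Qed.

End S.

Lemma app3_prefix (qe q1 q2 : position) (x : nat) : qe ++ [x] = q1 ++ q2 -> q2 <> [] ->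
  exists q3, qe = q1 ++ q3.
Proof.
  revert q1; induction qe as [|a qe IH]; intros [|b q1] E N; simpl in *.
  - exists []; auto.
  - destruct q1; simpl in E; inversion E; subst; congruence.
  - exists (a :: qe); auto.
  - inversion E; subst. destruct (IH q1) as [q3 ->]; auto. exists q3; auto.
Qed.

Lemma main_case ns s M U V p t :
  ns s -> public ns M -> s_protected ns s U V ->
  sub s M U = sub s M V ->
  subterm U p = Some (Name s) -> subterm V p = Some t -> t <> Name s ->
  sprefix_ok s V p -> False.
Proof.
  intros Hns [HM _] Hprot Hs HU HV Ht Hp.
  destruct (Hprot p HU) as (qe & _ & [r Er] & (n & Hn & Hnn & Hns') & Hprob).
  destruct (follow s M (qe ++ [3]) U V (Name n)) as (v & Hv & Hsv); auto.
  { intros q1 q2 E N. destruct (app3_prefix _ _ _ _ E N) as [q3 ->].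
    apply (Hp q1 (q3 ++ [1] ++ r)). rewrite Er; repeat rewrite <- app_assoc; reflexivity.
    destruct q3; simpl; discriminate. }
  assert (v = Name n).
  { unfold sub in Hsv; simpl in Hsv. destruct (Nat.eqb_spec n s); try congruence.
    destruct v as [m| |]; simpl in Hsv; try congruence.
    destruct (Nat.eqb_spec m s); try congruence.
    exfalso. apply (HM n Hnn). rewrite <- Hsv. simpl. reflexivity. }
  subst v.
  destruct (Hprob (Name n) Hn V (qe ++ [3]) (or_intror eq_refl) Hv) as (q' & Eq & Hq).
  apply app_inj_tail in Eq. destruct Eq as [<- _].
  rewrite Er in HU, HV. rewrite !subterm_app in HU, HV. rewrite Hq in HV.
  congruence.
Qed.

Theorem lemma2p13 (ns : name -> Prop) (s : name) (M U V : term) :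
  ns s ->
  wf M -> wf U -> wf V ->
  ground M -> public ns M ->
  s_protected ns s U V ->
  s_protected ns s V U ->
  subst_name s M U = subst_name s M V -> U = V.
Proof.
  intros Hns _ _ _ _ Hpub H1 H2 Hs.
  apply NNPP; intro Hne.
  destruct (find s M U V Hs Hne) as (p & t & [[Ha Hb]|[Ha Hb]] & Ht & Pu & Pv).
  - exact (main_case ns s M U V p t Hns Hpub H1 Hs Ha Hb Ht Pv).
  - exact (main_case ns s M V U p t Hns Hpub H2 (eq_sym Hs) Ha Hb Ht Pu).
Qed.
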